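(* Let $\Gamma$ be a countably infinite discrete group and let $\boldsymbol{b}=\Gamma\curvearrowright^b (Y,\nu)$ be a non-trivial totally ergodic measure preserving action of $\Gamma$. (i) If $C\subseteq\Gamma$ is a subset such that $\nu(\{y\in Y : C\subseteq \Gamma_y\})>0$, then the subgroup $\langle C\rangle$ generated by $C$ is finite. (ii) For $\nu$-almost every $y\in Y$, the stabilizer $\Gamma_y$ is locally finite.
   Context: A measure preserving action $\Gamma\curvearrowright^b (Y,\nu)$ consists of a standard Borel space $Y$, a Borel probability measure $\nu$, and a Borel $\nu$-preserving action of $\Gamma$ on $Y$. It is non-trivial if $\nu$ is not a point mass, and totally ergodic if its restriction to every infinite subgroup of $\Gamma$ is ergodic. The stabilizer is $\Gamma_y=\{\gamma\in\Gamma:\gamma^b y=y\}$. A group is locally finite if every finitely generated subgroup is finite. *)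

(* Defs.v *)
From HB Require Import structures.
From mathcomp Require Import all_boot all_order all_algebra.
From mathcomp Require Import monoid.
From mathcomp Require Import all_classical all_reals all_analysis.

Set Implicit Arguments.
Unset Strict Implicit.
Unset Printing Implicit Defensive.

Import Order.TTheory GRing.Theory Num.Theory.
Local Open Scope classical_set_scope.
Local Open Scope ring_scope.

Definition is_subgroup (G : groupType) (H : set G) : Prop :=
  H (@monoid.one G) /\ (forall x y, H x -> H y -> H (monoid.mul x y)) /\
  (forall x, H x -> H (monoid.inv x)).

Definition gen_subgroup (G : groupType) (C : set G) : set G :=
  [set g | forall H : set G, is_subgroup H -> C `<=` H -> H g].

Definition locally_finite (G : groupType) (S : set G) : Prop :=
  forall F : set G, finite_set F -> F `<=` S -> finite_set (gen_subgroup F).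

Definition countably_infinite (G : groupType) : Prop :=
  countable [set: G] /\ infinite_set [set: G].

(* Standard Borel spaces: Y is Borel isomorphic to a Borel subset of
   the real line (Kuratowski's characterisation). *)
Definition standard_borel (R : realType) d (Y : measurableType d) : Prop :=
  exists (f : Y -> R) (B : set R),
    measurable B /\ measurable_fun [set: Y] f /\
    set_inj [set: Y] f /\ f @` [set: Y] = B /\
    (forall A : set Y, measurable A -> measurable (f @` A)).

Definition mp_action (G : groupType) (R : realType) d (Y : measurableType d)
    (nu : {measure set Y -> \bar R}) (b : G -> Y -> Y) : Prop :=
  (forall y, b (@monoid.one G) y = y) /\
  (forall g h y, b (monoid.mul g h) y = b g (b h y)) /\
  (forall g, measurable_fun [set: Y] (b g)) /\
  (forall g A, measurable A -> nu (b g @^-1` A) = nu A).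

Definition nontrivial_measure (R : realType) d (Y : measurableType d)
    (nu : {measure set Y -> \bar R}) : Prop :=
  forall y : Y, exists A, measurable A /\ nu A <> \d_y A.

Definition ergodic_on (G : groupType) (R : realType) d (Y : measurableType d)
    (nu : {measure set Y -> \bar R}) (b : G -> Y -> Y) (H : set G) : Prop :=
  forall A : set Y, measurable A ->
    (forall h, H h -> b h @^-1` A = A) ->
    nu A = 0%E \/ nu A = 1%E.

Definition totally_ergodic (G : groupType) (R : realType) d (Y : measurableType d)
    (nu : {measure set Y -> \bar R}) (b : G -> Y -> Y) : Prop :=
  forall H : set G, is_subgroup H -> infinite_set H -> ergodic_on nu b H.

Definition stabilizer (G : groupType) (Y : Type) (b : G -> Y -> Y) (y : Y)
  : set G := [set g | b g y = y].

(* Main.v *)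
Require Import Defs.
From HB Require Import structures.
From mathcomp Require Import all_boot all_order all_algebra.
From mathcomp Require Import monoid.
From mathcomp Require Import all_classical all_reals all_analysis.
From mathcomp Require Import lra.
Import Order.TTheory GRing.Theory Num.Theory.
Local Open Scope classical_set_scope.
Local Open Scope ring_scope.
Lemma null_bigcupT (R : realType) d (Y : measurableType d) (nu : probability Y R) (F : nat -> set Y) :
  (forall n, measurable (F n)) -> (forall n, nu (F n) = 0%E) -> nu (\bigcup_n F n) = 0%E.
Proof.
move=> mF F0.
have [N [mN N0 sN]] : nu.-negligible (\bigcup_n F n).
  by apply: negligible_bigcup => n; exists (F n); split; [exact: mF|exact: F0|done].
apply/eqP; rewrite -measure_le0 -N0; apply: le_measure => //; rewrite inE //.
exact: bigcupT_measurable.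
Qed.

Lemma meas_le (R : realType) (x : R) : measurable [set r : R | r <= x].
Proof.
have -> : [set r : R | r <= x] = [set` `]-oo, x]].
  by apply/seteqP; split => r /=; rewrite in_itv /=.
exact: measurable_itv.
Qed.
Lemma meas_lt (R : realType) (x : R) : measurable [set r : R | r < x].
Proof.
have -> : [set r : R | r < x] = [set` `]-oo, x[].
  by apply/seteqP; split => r /=; rewrite in_itv /=.
exact: measurable_itv.
Qed.
Lemma meas_gt (R : realType) (x : R) : measurable [set r : R | x < r].
Proof.
have -> : [set r : R | x < r] = [set` `]x, +oo[].
  by apply/seteqP; split => r /=; rewrite in_itv /= andbT.
exact: measurable_itv.
Qed.
Lemma zero_one_dirac (R : realType) d (Y : measurableType d) (nu : probability Y R) (f : Y -> R) :
  measurable_fun setT f -> set_inj setT f ->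
  (forall B, measurable B -> nu B = 0%E \/ nu B = 1%E) ->
  exists y0, forall A, measurable A -> nu A = \d_y0 A.
Proof.
move=> mf finj zo.
have mpre : forall B : set R, measurable B -> measurable (f @^-1` B).
  by move=> B mB; rewrite -[f @^-1` B]setTI; apply: mf.
pose pre x := f @^-1` [set r : R | r <= x].
have mp x : measurable (pre x) by apply: mpre; apply: meas_le.
have pmono x y : x <= y -> (nu (pre x) <= nu (pre y))%E.
  move=> xy; apply: le_measure; rewrite ?inE //.
  by move=> z /= zx; apply: le_trans zx xy.
have zo' x : nu (pre x) = 0%E \/ nu (pre x) = 1%E by apply: zo.
have nat_ub (x : R) : exists n : nat, x <= n%:R.
  exists (Num.bound `|x|).
  apply: le_trans (ltW (archi_boundP (normr_ge0 x))); exact: ler_norm.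
have setT1 : nu setT = 1%E by rewrite probability_setT.
have [n0 Hn0] : exists n : nat, nu (pre n%:R) = 1%E.
  apply: contrapT => H.
  have H0 : forall n : nat, nu (pre n%:R) = 0%E.
    by move=> n; case: (zo' n%:R) => // h1; exfalso; apply: H; exists n.
  have := @null_bigcupT _ _ _ nu _ (fun n => mp n%:R) H0.
  have -> : \bigcup_n pre n%:R = setT.
    apply/seteqP; split => // z _; have [n hn] := nat_ub (f z); by exists n.
  by rewrite setT1 => /eqP; rewrite onee_eq0.
have compl x : f @^-1` [set r | x < r] = ~` pre x.
  by apply/seteqP; split => z /=; rewrite ltNge => /negP.
have [m0 Hm0] : exists m : nat, nu (pre (- m%:R)) = 0%E.
  apply: contrapT => H.
  have H0 : forall n : nat, nu (f @^-1` [set r | - n%:R < r]) = 0%E.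
    move=> n; rewrite compl probability_setC //.
    case: (zo' (- n%:R)) => h1; first by exfalso; apply: H; exists n.
    by rewrite h1 subee.
  have := @null_bigcupT _ _ _ nu _ (fun n => mpre _ (@meas_gt R (- n%:R))) H0.
  have -> : \bigcup_n f @^-1` [set r | - n%:R < r] = setT.
    apply/seteqP; split => // z _; have [n hn] := nat_ub (- f z + 1); exists n => //=.
    lra.
  by rewrite setT1 => /eqP; rewrite onee_eq0.
pose S := [set x : R | nu (pre x) = 0%E].
have ubS : ubound S n0%:R.
  move=> x Sx; rewrite leNgt; apply/negP => hx.
  have := pmono _ _ (ltW hx); rewrite Hn0 Sx lee_fin ler10 //.
have hs : has_sup S by split; [exists (- m0%:R) | exists n0%:R].
pose t := sup S.
pose L := f @^-1` [set r | r < t].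
pose U := f @^-1` [set r | t < r].
have epos (k : nat) : 0 < k.+1%:R^-1 :> R by rewrite invr_gt0 ltr0Sn.
have L0 : nu L = 0%E.
  have -> : L = \bigcup_k pre (t - k.+1%:R^-1).
    apply/seteqP; split => z /=.
      move=> /ltr_add_invr [k hk]; exists k => //=.
      move: hk; set e := (k.+1%:R^-1 : R) => hk; rewrite /pre /=; lra.
    move=> [k _]; rewrite /pre /L /=; have := epos k; set e := (k.+1%:R^-1 : R) => he hz; lra.
  apply: null_bigcupT => // k.
  have [e Se he] := sup_adherent (epos k) hs.
  apply/eqP; rewrite -measure_le0 -Se; apply: pmono; exact: ltW.
have U0 : nu U = 0%E.
  have -> : U = \bigcup_k f @^-1` [set r | t + k.+1%:R^-1 < r].
    apply/seteqP; split => z /=.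
      move=> /ltr_add_invr [k hk]; exists k => //=.
    move=> [k _]; rewrite /U /=; have := epos k; set e := (k.+1%:R^-1 : R) => he hz; lra.
  apply: null_bigcupT => [k|k]; first by apply: mpre; exact: meas_gt.
  rewrite compl probability_setC //.
  case: (zo' (t + k.+1%:R^-1)) => h1; last by rewrite h1 subee.
  have := sup_upper_bound hs h1; rewrite -/t.
  have := epos k; set e := (k.+1%:R^-1 : R) => he ht; exfalso; clear -he ht; lra.
pose P1 := f @^-1` [set t].
have mP1 : measurable P1 by apply: mpre; exact: measurable_set1.
have mL : measurable L by apply: mpre; exact: meas_lt.
have mU : measurable U by apply: mpre; exact: meas_gt.
have P11 : nu P1 = 1%E.
  case: (zo P1 mP1) => // h0.
  have eT : setT = (P1 `|` L) `|` U.
    apply/seteqP; split => // z _ /=; rewrite /P1 /L /U /=.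
    by case: (ltgtP (f z) t) => h; [left; right|right|left; left].
  have : (nu setT <= nu P1 + nu L + nu U)%E.
    rewrite eT; apply: le_trans (measureU2 _ _ _) _ => //; first exact: measurableU.
    by rewrite leeD2r // measureU2.
  by rewrite h0 L0 U0 setT1 !adde0 lee_fin ler10.
have [y0 hy0] : exists y0, P1 y0.
  apply: contrapT => H.
  have : P1 = set0 by apply/seteqP; split => // z hz; apply: H; exists z.
  by move=> e0; move: P11; rewrite e0 measure0 => /eqP; rewrite eq_sym onee_eq0.
have eP1 : P1 = [set y0].
  apply/seteqP; split => z /=; last by move=> ->.
  move=> hz; apply: finj; rewrite ?inE //; by rewrite hz hy0.
exists y0 => A mA; rewrite diracE.
have [Ay|nAy] := pselect (A y0).
  rewrite mem_set //.
  case: (zo A mA) => // h0.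
  have : (nu P1 <= nu A)%E.
    apply: le_measure; rewrite ?inE //; rewrite eP1 => z ->; exact: Ay.
  by rewrite P11 h0 lee_fin ler10.
rewrite memNset //.
apply/eqP; rewrite -measure_le0.
have <- : nu (~` P1) = 0%E by rewrite probability_setC // P11 subee.
apply: le_measure; rewrite ?inE //; first exact: measurableC.
by rewrite eP1 => z Az /= hz; apply: nAy; rewrite -hz.
Qed.

Lemma stab_subgroup (G : groupType) (R : realType) d (Y : measurableType d)
    (nu : {measure set Y -> \bar R}) (b : G -> Y -> Y) :
  mp_action nu b -> forall y, is_subgroup (stabilizer b y).
Proof.
move=> [b1 [bM _]] y; split; first exact: b1.
split; first by move=> x z hx hz; rewrite /stabilizer /= bM hz hx.
move=> x hx; rewrite /stabilizer /=.
by rewrite -{1}hx -bM mulVg b1.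
Qed.
Arguments stab_subgroup {G R d Y nu b}.

Lemma gen_subgroup_is (G : groupType) (C : set G) : is_subgroup (gen_subgroup C).
Proof.
split; first by move=> H [].
split; first by move=> x y hx hy H hH hC; apply: (hH.2.1); [apply: hx|apply: hy].
by move=> x hx H hH hC; apply: (hH.2.2); apply: hx.
Qed.

Lemma gen_subgroup_min (G : groupType) (C H : set G) :
  is_subgroup H -> C `<=` H -> gen_subgroup C `<=` H.
Proof. by move=> hH hC x; apply. Qed.

Lemma gen_subgroup_incl (G : groupType) (C : set G) : C `<=` gen_subgroup C.
Proof. by move=> x Cx H _; apply. Qed.

Lemma negligible_countable_bigcup (R : realType) d (Y : measurableType d)
  (nu : probability Y R) (I : Type) (S : set I) (F : I -> set Y) :
  countable S -> (forall i, S i -> nu.-negligible (F i)) ->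
  nu.-negligible (\bigcup_(i in S) F i).
Proof.
move=> /countable_injP [g ginj] hF.
pose G n := \bigcup_(i in [set i | S i /\ g i = n]) F i.
apply: (@negligibleS _ _ _ nu (\bigcup_n G n)).
  by move=> y [i Si Fy]; exists (g i) => //; exists i.
apply: negligible_bigcup => n.
have [[i0 [Si0 gi0]]|nex] := pselect (exists i, S i /\ g i = n).
  apply: (negligibleS _ (hF i0 Si0)).
  move=> y [i [Si gi] Fy]; have -> : i0 = i => //.
  by apply: ginj; rewrite ?inE // gi gi0.
apply: (negligibleS _ (negligible_set0 nu)).
by move=> y [i hi _]; apply: nex; exists i.
Qed.

Theorem lemma3p1 (Gamma : groupType) (R : realType) (d : measure_display)
    (Y : measurableType d) (nu : probability Y R) (b : Gamma -> Y -> Y) :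
  countably_infinite Gamma ->
  standard_borel R Y ->
  mp_action nu b ->
  nontrivial_measure nu ->
  totally_ergodic nu b ->
  (forall C : set Gamma,
      (0 < nu [set y | C `<=` stabilizer b y])%E ->
      finite_set (gen_subgroup C)) /\
  {ae nu, forall y, locally_finite (stabilizer b y)}.
Proof.
move=> [cnt _] [f [B [_ [mf [finj _]]]]] hmp ntriv TE.
have [b1 [bM [mb _]]] := hmp.
have mfix g : measurable [set y | b g y = y].
  have -> : [set y | b g y = y] = (fun y => f (b g y) - f y) @^-1` [set 0].
    apply/seteqP; split => y /=; first by move=> ->; rewrite subrr.
    move/eqP; rewrite subr_eq0 => /eqP hy.
    by apply: finj; rewrite ?inE.
  rewrite -[X in measurable X]setTI.
  exact: (measurable_realfun.measurable_funB (measurableT_comp mf (mb g)) mf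
     measurableT (measurable_set1 0)).
have mA (C : set Gamma) : measurable [set y | C `<=` stabilizer b y].
  rewrite -[X in measurable X]setCK; apply: measurableC.
  have -> : ~` [set y | C `<=` stabilizer b y] =
      \bigcup_g [set y | C g /\ b g y <> y].
    apply/seteqP; split => y /=.
      move=> hy; apply: contrapT => hn; apply: hy => g Cg.
      by apply: contrapT => hg; apply: hn; exists g.
    by move=> [g _ [Cg hg]] hC; apply: hg; apply: hC.
  apply: countable_bigcupT_measurable => // g.
  have [Cg|nCg] := pselect (C g).
    have -> : [set y | C g /\ b g y <> y] = ~` [set y | b g y = y].
      by apply/seteqP; split => y /=; [case|split].
    exact: measurableC.
  have -> : [set y | C g /\ b g y <> y] = set0.
    by apply/seteqP; split => y //= [].
  exact: measurable0.
have partI : forall C : set Gamma,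
    (0 < nu [set y | C `<=` stabilizer b y])%E -> finite_set (gen_subgroup C).
  move=> C Cpos; apply: contrapT => Hinf.
  pose H := gen_subgroup C.
  pose A := [set y | C `<=` stabilizer b y].
  have fixA y h : A y -> H h -> b h y = y.
    move=> Ay Hh; exact: (Hh (stabilizer b y) (stab_subgroup hmp y) Ay).
  have Hsub : is_subgroup H := @gen_subgroup_is _ C.
  have inv (D : set Y) h : H h -> b h @^-1` (D `&` A) = D `&` A.
    move=> Hh; apply/seteqP; split => y /=.
      move=> [Dh Ah].
      have ey : b h y = y.
        have := fixA _ _ Ah (Hsub.2.2 _ Hh).
        by rewrite -bM mulVg b1 => /esym.
      by rewrite -ey.
    by move=> [Dy Ay]; rewrite fixA.
  have erg := TE H Hsub Hinf.
  have nuA : nu A = 1%E.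
    have invA : forall h, H h -> b h @^-1` A = A.
      by move=> h Hh; have := inv setT h Hh; rewrite setTI.
    case: (erg A (mA C) invA) => // h0.
    by move: Cpos; rewrite -/A h0 ltxx.
  have zo : forall D, measurable D -> nu D = 0%E \/ nu D = 1%E.
    move=> D mD.
    have -> : nu D = nu (D `&` A).
      rewrite [LHS](measureDI _ mD (mA C)) -/A.
      rewrite [X in (X + _)%E](_ : _ = 0%E) ?add0e //.
        apply/eqP; rewrite -measure_le0.
        have <- : nu (~` A) = 0%E by rewrite probability_setC ?nuA ?subee //; exact: mA.
        apply: le_measure; rewrite ?inE //.
        - by apply: measurableD => //; exact: mA.
        - by apply: measurableC; exact: mA.
    apply: erg; first by apply: measurableI => //; exact: mA.
    by move=> h Hh; apply: inv.
  have [y0 hy0] := @zero_one_dirac _ _ _ nu f mf finj zo.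
  have [D [mD hD]] := ntriv y0.
  by apply: hD; apply: hy0.
split => //.
pose Sb := [set F : set Gamma | (F `<=` setT /\ finite_set F) /\
                                ~ finite_set (gen_subgroup F)].
have cSb : countable Sb.
  apply: sub_countable (countable_finite_subset cnt).
  by apply: subset_card_le => F [].
apply: (negligibleS _ (@negligible_countable_bigcup _ _ _ nu _ Sb
          (fun F => [set y | F `<=` stabilizer b y]) cSb _)).
  move=> y /= hy; apply: contrapT => hn; apply: hy => F fF FS.
  apply: contrapT => hinf; apply: hn; exists F => //.
move=> F [_ hinf]; exists [set y | F `<=` stabilizer b y]; split => //.
have := measure_ge0 nu [set y | F `<=` stabilizer b y].
rewrite le_eqVlt => /orP [/eqP <-//|hpos].
by exfalso; apply: hinf; apply: partI.
Qed.
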